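(* Consider an $N$-player distributionally robust game (as defined in the context) with player risk levels $\varepsilon_i\in(0,1]$ and ambiguity set $$\mathcal{F} = \{ Q : Q[\mathbf{W}\cdot\mathrm{vec}(\tilde{\mathbf{P}})\le\mathbf{h}] = 1,\ \mathbb{E}_Q[\mathrm{vec}\,\tilde{\mathbf{P}}] = \mathbf{m},\ \mathbb{E}_Q[\|\mathrm{vec}(\tilde{\mathbf{P}})-\mathbf{m}\|_1]\le s\},$$ where $\{\mathbf{P}:\mathbf{W}\mathrm{vec}(\mathbf{P})\le\mathbf{h}\}$ is a bounded polyhedral set containing $\mathbf{m}$, and with $s=0$. Then its set of Distributionally Robust Optimization Equilibria equals the set of Nash equilibria of the complete information game with fixed payoff matrix $\mathbf{M}$, where $\mathrm{vec}(\mathbf{M})=\mathbf{m}$.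
   Context: A finite $N$-player game: player $i$ has actions $\{1,\dots,a_i\}$ and mixed strategy set $S_{a_i} = \{\mathbf{x}^i\in\mathbb{R}^{a_i} : \mathbf{x}^i\ge 0,\ \sum_{j=1}^{a_i} x^i_j = 1\}$; $S=\prod_{i} S_{a_i}$. A payoff matrix $\mathbf{P}\in\mathbb{R}^{N\times\prod_{k=1}^N a_k}$ has entries $\mathbf{P}^i_{(j_1,\dots,j_N)}$, the payoff to player $i$ when each player $k$ plays action $j_k$. The expected payoff is $\pi_i(\mathbf{P};\mathbf{x}^1,\dots,\mathbf{x}^N) = \sum_{j_1=1}^{a_1}\cdots\sum_{j_N=1}^{a_N}\mathbf{P}^i_{(j_1,\dots,j_N)}\prod_{k=1}^N x^k_{j_k}$. Write $\mathbf{x}^{-i}$ for the strategies of all players except $i$, and $(\mathbf{x}^{-i},\mathbf{u}^i)$ for the profile with $\mathbf{x}^i$ replaced by $\mathbf{u}^i$. $\mathrm{vec}(\mathbf{A})$ is the column vector obtained by stacking the rows of $\mathbf{A}$. $\tilde{\mathbf{P}}$ denotes a random payoff matrix. For a loss random variable $L$ and $\varepsilon\in(0,1]$, $Q\text{-CVaR}_\varepsilon(L) = \min_{\zeta\in\mathbb{R}} \zeta + \frac{1}{\varepsilon}\mathbb{E}_Q[L-\zeta]^+$, with $[x]^+=\max\{x,0\}$. Distributionally robust game: commonly known ambiguity set $\mathcal{F}$ of distributions $Q$ of $\tilde{\mathbf{P}}$ and risk levels $\varepsilon_i\in(0,1]$. A profile $(\mathbf{x}^1,\dots,\mathbf{x}^N)\in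 S$ is a Distributionally Robust Optimization Equilibrium iff for every $i$, $\mathbf{x}^i\in\arg\min_{\mathbf{u}^i\in S_{a_i}}\sup_{Q\in\mathcal{F}} Q\text{-CVaR}_{\varepsilon_i}[-\pi_i(\tilde{\mathbf{P}};\mathbf{x}^{-i},\mathbf{u}^i)]$. A Nash equilibrium of the game with fixed payoff matrix $\check{\mathbf{P}}$ is a profile in $S$ with $\mathbf{x}^i\in\arg\max_{\mathbf{u}^i\in S_{a_i}}\pi_i(\check{\mathbf{P}};\mathbf{x}^{-i},\mathbf{u}^i)$ for every $i$. *)

(* Defs.v *)
From HB Require Import structures.
From mathcomp Require Import all_boot all_order all_algebra.
From mathcomp Require Import all_classical all_reals all_analysis.
Set Implicit Arguments. Unset Strict Implicit. Unset Printing Implicit Defensive.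
Import Order.TTheory GRing.Theory Num.Theory.
Local Open Scope classical_set_scope.
Local Open Scope ring_scope.

Section DRGame.
Variable R : realType.
Variable N : nat.
(* a i = number of actions of player i; actions of player i are 'I_(a i) *)
Variable a : 'I_N -> nat.

Definition prof := {dffun forall i : 'I_N, 'I_(a i)}.

Definition ncols := #|{: prof}|.
Definition vlen := (N * ncols)%N.

(* payoff matrix P in R^{N x prod a_k}; column of profile j is enum_rank j *)
Definition payoff_mx := 'M[R]_(N, ncols).
Definition Pentry (P : payoff_mx) (i : 'I_N) (j : prof) : R := P i (enum_rank j).

Definition strat := forall i : 'I_N, 'I_(a i) -> R.

Definition in_simplex (i : 'I_N) (u : 'I_(a i) -> R) : Prop :=
  (forall j, 0 <= u j) /\ \sum_(j < a i) u j = 1.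

Definition in_S (x : strat) : Prop := forall i, in_simplex (x i).

Definition exp_payoff (P : payoff_mx) (i : 'I_N) (x : strat) : R :=
  \sum_(j : prof) Pentry P i j * \prod_(k < N) x k (j k).

Definition replace (x : strat) (i : 'I_N) (u : 'I_(a i) -> R) : strat :=
  @dfwith _ (fun k : 'I_N => 'I_(a k) -> R) x i u.

(* the random vector vec(P~) takes values in vlen.-tuple R (product Borel
   sigma-algebra); these convert between tuples, row vectors and matrices.
   vec = mxvec stacks the rows. *)
Definition tuple_row (t : vlen.-tuple R) : 'rV[R]_vlen := \row_k tnth t k.
Definition mx_of_tuple (t : vlen.-tuple R) : payoff_mx := vec_mx (tuple_row t).

Definition CVaR (Q : probability (vlen.-tuple R) R) (eps : R)
    (L : vlen.-tuple R -> R) : \bar R :=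
  ereal_inf [set (zeta%:E + (eps^-1)%:E * \int[Q]_t (Num.max (L t - zeta) 0)%:E)%E
            | zeta in [set: R]].

Definition in_polyhedron (nr : nat) (W : 'M[R]_(nr, vlen)) (h : 'cV[R]_nr)
    (v : 'rV[R]_vlen) : Prop :=
  forall r, (W *m v^T) r 0 <= h r 0.

Definition ambiguity_set (nr : nat) (W : 'M[R]_(nr, vlen)) (h : 'cV[R]_nr)
    (m : 'rV[R]_vlen) (s : R) : set (probability (vlen.-tuple R) R) :=
  [set Q | [/\ Q [set t | in_polyhedron W h (tuple_row t)] = 1%E,
     (forall k, Q.-integrable [set: vlen.-tuple R] (fun t => (tnth t k)%:E)
                /\ (\int[Q]_t (tnth t k)%:E = (m 0 k)%:E)%E) &
     (\int[Q]_t (\sum_(k < vlen) `|tnth t k - m 0 k|)%:E <= s%:E)%E ]].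

Definition worst_CVaR (F : set (probability (vlen.-tuple R) R)) (eps : R)
    (i : 'I_N) (y : strat) : \bar R :=
  ereal_sup [set CVaR Q eps (fun t => - exp_payoff (mx_of_tuple t) i y) | Q in F].

Definition is_DROE (F : set (probability (vlen.-tuple R) R)) (eps : 'I_N -> R)
    (x : strat) : Prop :=
  in_S x /\ forall i (u : 'I_(a i) -> R), in_simplex u ->
    (worst_CVaR F (eps i) i x <= worst_CVaR F (eps i) i (replace x u))%E.

Definition is_Nash (P : payoff_mx) (x : strat) : Prop :=
  in_S x /\ forall i (u : 'I_(a i) -> R), in_simplex u ->
    exp_payoff P i (replace x u) <= exp_payoff P i x.

End DRGame.

(* Main.v *)
Require Import Defs.
From HB Require Import structures.
From mathcomp Require Import all_boot all_order all_algebra.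
From mathcomp Require Import all_classical all_reals all_analysis.
Import Order.TTheory GRing.Theory Num.Theory.
Local Open Scope ring_scope.

Section Aux.
Variable R : realType.
Variable N : nat.
Variable a : 'I_N -> nat.

Lemma meas_payoff (i : 'I_N) (y : strat R a) :
  measurable_fun [set: (vlen a).-tuple R]
    (fun t => exp_payoff (mx_of_tuple t) i y).
Proof.
have -> : (fun t : (vlen a).-tuple R => exp_payoff (mx_of_tuple t) i y) =
  (fun t => \sum_(j : prof a) tnth t (mxvec_index i (enum_rank j)) *
              \prod_(k < N) y k (j k)).
  apply/funext => t; rewrite /exp_payoff; apply: eq_bigr => j _.
  by rewrite /Pentry /mx_of_tuple /vec_mx mxE /tuple_row mxE.
apply: measurable_sum => j.
apply: measurable_realfun.measurable_funM; last exact: measurable_cst.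
exact: measurable_tnth.
Qed.

Variable m : 'rV[R]_(vlen a).

Definition tm : (vlen a).-tuple R := [tuple m 0 k | k < vlen a].

Lemma tuple_row_tm : tuple_row tm = m.
Proof. by apply/rowP => k; rewrite !mxE tnth_mktuple. Qed.

Definition gdist (t : (vlen a).-tuple R) : R :=
  \sum_(k < vlen a) `|tnth t k - m 0 k|.

Lemma meas_gdist : measurable_fun [set: (vlen a).-tuple R] gdist.
Proof.
apply: measurable_sum => k.
apply: measurableT_comp => //.
apply: measurable_realfun.measurable_funB; first exact: measurable_tnth.
exact: measurable_cst.
Qed.

Lemma concentrated (Q : probability ((vlen a).-tuple R) R) :
  (\int[Q]_t (gdist t)%:E <= 0%:E)%E ->
  forall f : (vlen a).-tuple R -> R,
    measurable_fun [set: (vlen a).-tuple R] f ->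
    (\int[Q]_t (f t)%:E = (f tm)%:E)%E.
Proof.
move=> Hg f mf.
have gge0 t : 0 <= gdist t by apply: sumr_ge0 => k _.
have H0 : (\int[Q]_t `|(gdist t)%:E| = 0)%E.
  apply/eqP; rewrite eq_le; apply/andP; split; last first.
    by apply: integral_ge0 => t _; exact: abse_ge0.
  rewrite (eq_integral (fun t => (gdist t)%:E)) //.
  by move=> t _; rewrite gee0_abs // lee_fin.
have /ae_eq_integral_abs H1 := H0.
have := H1 measurableT ((measurable_realfun.measurable_EFinP _ _).2 (meas_gdist)) .
move=> Hae.
rewrite (ae_eq_integral (cst (f tm)%:E)) //.
- rewrite integral_cst //.
  rewrite -[RHS]mule1; congr (_ * _)%E; exact: probability_setT.
- exact/measurable_realfun.measurable_EFinP.
- apply: filterS Hae => t Ht Dt; have /= := Ht Dt.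
  move/eqP; rewrite eqe => /eqP Hgt.
  have -> : t = tm; last by [].
  apply: eq_from_tnth => k; rewrite tnth_mktuple.
  have := psumr_eq0P (fun k _ => normr_ge0 (tnth t k - m 0 k)) Hgt.
  by move=> /(_ k isT) /eqP; rewrite normr_eq0 subr_eq0 => /eqP.
Qed.


Lemma gdist_tm : gdist tm = 0.
Proof.
by rewrite /gdist big1 // => k _; rewrite tnth_mktuple subrr normr0.
Qed.

Lemma CVaR_conc (Q : probability ((vlen a).-tuple R) R) (eps : R)
  (L : (vlen a).-tuple R -> R) :
  (\int[Q]_t (gdist t)%:E <= 0%:E)%E -> 0 < eps <= 1 ->
  measurable_fun [set: (vlen a).-tuple R] L ->
  CVaR Q eps L = (L tm)%:E.
Proof.
move=> Hg /andP[e0 e1] mL.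
rewrite /CVaR.
have HI z : (\int[Q]_t (Num.max (L t - z) 0)%:E = (Num.max (L tm - z) 0)%:E)%E.
  have mf : measurable_fun [set: (vlen a).-tuple R] (fun t => Num.max (L t - z) 0).
    apply: measurable_realfun.measurable_maxr; last exact: measurable_cst.
    apply: measurable_realfun.measurable_funB => //; exact: measurable_cst.
  have H := concentrated Q Hg _ mf; exact H.
apply/eqP; rewrite eq_le; apply/andP; split.
  apply: ereal_inf_lbound; exists (L tm) => //.
  by rewrite HI subrr maxxx mule0 adde0.
apply: le_ereal_inf_tmp => _ [z _ <-].
rewrite HI -EFinM -EFinD lee_fin.
rewrite /Order.max; case: ifP => lt0.
  by rewrite mulr0 addr0 -subr_le0 ltW.
have c0 : 0 <= L tm - z by rewrite leNgt lt0.
have H : L tm - z <= eps^-1 * (L tm - z).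
  by rewrite ler_peMl ?invf_ge1.
by rewrite -{1}(subrK z (L tm)) addrC lerD2l.
Qed.

End Aux.

Arguments tm {R N a} m.
Arguments meas_gdist {R N a} m.
Arguments gdist_tm {R N a} m.
Arguments tuple_row_tm {R N a} m.
Arguments meas_payoff {R N a} i y.
Arguments gdist {R N a} m t.
Arguments concentrated {R N a m} Q _ f _.
Arguments CVaR_conc {R N a m} Q eps L _ _ _.

Section Main.
Variables (R : realType) (N : nat) (a : 'I_N -> nat).
Variables (nr : nat) (W : 'M[R]_(nr, vlen a)) (h : 'cV[R]_nr) (M : payoff_mx R a).
Hypothesis Hm : in_polyhedron W h (mxvec M).

Lemma dirac_in : ambiguity_set W h (mxvec M) 0 (\d_(tm (mxvec M))).
Proof.
split.
- have Hp : in_polyhedron W h (tuple_row (tm (mxvec M))) by rewrite tuple_row_tm.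
  by rewrite /= /dirac indicE mem_set.
- move=> k; split.
  + apply/integrableP; split.
      apply/measurable_realfun.measurable_EFinP; exact: measurable_tnth.
    rewrite integral_dirac //; last first.
      under eq_fun do rewrite abse_EFin.
      have HH : measurable_fun [set: (vlen a).-tuple R]%classic (fun x => `|tnth x k|).
        apply: measurableT_comp => //; exact: measurable_tnth.
      exact: (proj2 (measurable_realfun.measurable_EFinP _ _) HH).
    by rewrite diracT mul1e ltey.
  + rewrite integral_dirac //; last first.
      apply/measurable_realfun.measurable_EFinP; exact: measurable_tnth.
    by rewrite diracT mul1e tnth_mktuple.
- rewrite integral_dirac //; last first.
    exact: (proj2 (measurable_realfun.measurable_EFinP _ _) (meas_gdist (mxvec M))).
  by rewrite diracT mul1e; have := gdist_tm (mxvec M); rewrite /gdist => ->.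
Qed.

End Main.

Theorem proposition2 (R : realType) (N : nat) (a : 'I_N -> nat)
    (eps : 'I_N -> R) (Heps : forall i, 0 < eps i <= 1)
    (nr : nat) (W : 'M[R]_(nr, vlen a)) (h : 'cV[R]_nr)
    (M : payoff_mx R a)
    (Hbounded : exists B : R, forall v : 'rV[R]_(vlen a),
        in_polyhedron W h v -> forall k, `|v 0 k| <= B)
    (Hm : in_polyhedron W h (mxvec M)) :
  forall x : strat R a,
    is_DROE (ambiguity_set W h (mxvec M) 0) eps x <-> is_Nash M x.
Proof.
move=> x.
have HtM : mx_of_tuple (tm (mxvec M)) = M.
  by rewrite /mx_of_tuple tuple_row_tm mxvecK.
have Hc : forall Q, ambiguity_set W h (mxvec M) 0 Q ->
    (\int[Q]_t (gdist (mxvec M) t)%:E <= 0%:E)%E.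
  by move=> Q [_ _ H].
have mL : forall i y, measurable_fun [set: (vlen a).-tuple R]%classic
    (fun t => - exp_payoff (mx_of_tuple t) i y).
  move=> i y; apply: measurableT_comp => //; exact: meas_payoff.
have Hw : forall i y, worst_CVaR (ambiguity_set W h (mxvec M) 0) (eps i) i y
    = (- exp_payoff M i y)%:E.
  move=> i y; rewrite /worst_CVaR; apply/eqP; rewrite eq_le; apply/andP; split.
    apply: ge_ereal_sup => _ [Q HQ <-].
    by rewrite (CVaR_conc Q (eps i) _ (Hc Q HQ) (Heps i) (mL i y)) HtM.
  apply: ereal_sup_ubound; exists (\d_(tm (mxvec M))).
    exact: (@dirac_in _ _ _ _ W h M Hm).
  by rewrite (CVaR_conc _ (eps i) _ (Hc _ (@dirac_in _ _ _ _ W h M Hm)) (Heps i) (mL i y)) HtM.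
split.
  move=> [HS H]; split => // i u Hu.
  by have := H i u Hu; rewrite !Hw lee_fin lerN2.
move=> [HS H]; split => // i u Hu.
by rewrite !Hw lee_fin lerN2; exact: H.
Qed.
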